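(* Let $N\ge2$ and, for $0\le k\le N-1$, let $H_N(k)=\sum_{i=k+1}^{N-1}\frac1i$ (so $H_N(N-1)=0$). For $\theta>0$ define $$\kappa_N(\theta)=\begin{cases}0 & \text{if } 0<\theta\le H_N(0)^{-1},\\ k & \text{if } H_N(k-1)^{-1}<\theta\le H_N(k)^{-1}\text{ for some }1\le k\le N-2,\\ N-1&\text{if }\theta>N-1.\end{cases}$$ Then for every $\theta>0$: - $W(N,\kappa_N(\theta))\ge W(N,k)$ for all $0\le k\le N-1$; - in the weighted game of best choice with the Ewens distribution (probability of $\pi\in\mathfrak S_N$ proportional to $\theta^{\mathrm{lrm}(\pi)}$), the positional strategy that rejects the first $\kappa_N(\theta)$ candidates and then accepts the next left-to-right maximum maximizes the probability of winning among all strategies. Moreover, $\kappa_N$ is a nondecreasing function of $\theta$.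
   Context: Permutations of $\{1,\dots,N\}$ are written in one-line notation; $\mathfrak S_N$ is the set of all of them. An entry $\pi_j$ is a left-to-right maximum if $\pi_j>\pi_i$ for all $i<j$; $\mathrm{lrm}(\pi)$ is the number of left-to-right maxima. The weighted game of best choice: $\pi\in\mathfrak S_N$ is drawn with probability proportional to $\theta^{\mathrm{lrm}(\pi)}$. At step $i$ the player sees only the relative order of $\pi_1,\dots,\pi_i$ and decides to accept candidate $i$ (ending the game) or reject it irrevocably; candidate $N$ is accepted if all others were rejected. The player wins iff the accepted candidate $i$ has $\pi_i=N$. For $0\le k\le N-1$, $\pi$ is $k$-winnable if the first index $j>k$ with $\pi_j$ a left-to-right maximum has $\pi_j=N$. $W(N,k)=\sum_{k\text{-winnable }\pi}\theta^{\mathrm{lrm}(\pi)}$, so $W(N,k)/\sum_{\pi\in\mathfrak S_N}\theta^{\mathrm{lrm}(\pi)}$ is the winning probability of the positional strategy that rejects the first $k$ candidates and accepts the next left-to-right maximum. *)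

(* Defs.v *)
From HB Require Import structures.
From mathcomp Require Import all_boot all_order all_algebra all_fingroup.
Set Implicit Arguments. Unset Strict Implicit. Unset Printing Implicit Defensive.
Import Order.TTheory GRing.Theory Num.Theory.

(* Conventions: a permutation of {1,...,N} is represented by p : 'S_N, i.e. a
   permutation of {0,...,N-1}; position j (1-based) is index j-1 : 'I_N and
   value v (1-based) is v-1.  So "pi_j = N" becomes "val (p j) = N.-1". *)

Section Defs.
Variable N : nat.

Definition lrm_at (p : 'S_N) (j : 'I_N) : bool :=
  [forall i : 'I_N, (i < j)%N ==> (p i < p j)%N].

Definition lrm (p : 'S_N) : nat := #|[pred j : 'I_N | lrm_at p j]|.

(* k-winnable: the first index j > k (1-based), i.e. 0-based index >= k, at
   which there is a left-to-right maximum carries the value N. *)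
Definition kwinnable (p : 'S_N) (k : nat) : bool :=
  [exists j : 'I_N, [&& (k <= j)%N, lrm_at p j, val (p j) == N.-1 &
     [forall i : 'I_N, ((k <= i) && (i < j))%N ==> ~~ lrm_at p i]]].

(* relative order of the prefix p_0,...,p_i : the list, for each position
   j <= i, of the (0-based) rank of p j among p_0,...,p_i. *)
Definition relpat (p : 'S_N) (i : nat) : seq nat :=
  [seq #|[pred l : 'I_N | (l <= i)%N && (p l < p j)%N]|
   | j : 'I_N <- [seq j <- enum 'I_N | (val j <= i)%N]].

(* A (deterministic) strategy: given the relative order of the candidates seen
   so far (the step number being the length of the pattern), accept or not. *)
Definition strategy := seq nat -> bool.

(* 0-based index of the accepted candidate: the first i < N-1 at which the
   strategy accepts, and N-1 (the last candidate) if all others are rejected. *)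
Definition stop_time (s : strategy) (p : 'S_N) : nat :=
  find (fun i => s (relpat p i)) (iota 0 N.-1).

Definition wins (s : strategy) (p : 'S_N) : bool :=
  [exists i : 'I_N, (val i == stop_time s p) && (val (p i) == N.-1)].

(* positional strategy: reject the first k candidates, then accept the next
   left-to-right maximum (the current candidate is a left-to-right maximum
   iff its relative rank among those seen is the top one). *)
Definition positional (k : nat) : strategy :=
  fun pat => (k < size pat)%N && (last 0%N pat == (size pat).-1).

Variable R : realFieldType.
Local Open Scope ring_scope.

Definition W (theta : R) (k : nat) : R :=
  \sum_(p : 'S_N | kwinnable p k) theta ^+ lrm p.

Definition Zpart (theta : R) : R := \sum_(p : 'S_N) theta ^+ lrm p.

Definition winprob (theta : R) (s : strategy) : R :=
  (\sum_(p : 'S_N | wins s p) theta ^+ lrm p) / Zpart theta.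

Definition H (k : nat) : R := \sum_(k.+1 <= i < N) (i%:R)^-1.

Definition kappa (theta : R) : nat :=
  if theta <= (H 0)^-1 then 0%N
  else if (N.-1)%:R < theta then N.-1
  else \max_(k < N | (1 <= k <= N - 2)%N &&
                     ((H k.-1)^-1 < theta) && (theta <= (H k)^-1)) k.

End Defs.

(* Main.v *)
Require Import Defs.
From HB Require Import structures.
From mathcomp Require Import all_boot all_order all_algebra all_fingroup.
From mathcomp Require Import zify ring.
Set Implicit Arguments. Unset Strict Implicit. Unset Printing Implicit Defensive.
Import Order.TTheory GRing.Theory Num.Theory.

Section Ext.
Variable m : nat.

Definition extf (q : 'S_m) (v : 'I_m.+1) (i : 'I_m.+1) : 'I_m.+1 :=
  if unlift ord_max i is Some j then lift v (q j) else v.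

Lemma extf_inj q v : injective (extf q v).
Proof.
move=> x y; rewrite /extf.
case: unliftP => [j ->|->]; case: unliftP => [j' ->|->] //.
- by move/lift_inj/perm_inj->.
- by move=> E; have := neq_lift v (q j); rewrite E eqxx.
- by move=> E; have := neq_lift v (q j'); rewrite -E eqxx.
Qed.

Definition ext (x : 'S_m * 'I_m.+1) : 'S_m.+1 := perm (@extf_inj x.1 x.2).

Lemma ext_lift q v j : ext (q, v) (lift ord_max j) = lift v (q j).
Proof. by rewrite permE /extf liftK. Qed.

Lemma ext_max q v : ext (q, v) ord_max = v.
Proof. by rewrite permE /extf unlift_none. Qed.

Lemma ext_inj : injective ext.
Proof.
move=> [q v] [q' v'] E.
have Ev : v = v' by rewrite -(ext_max q v) -(ext_max q' v') E.
subst v'; congr (_, _); apply/permP => j.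
by apply: (@lift_inj _ v); rewrite -!ext_lift E.
Qed.

Lemma ext_bij : bijective ext.
Proof.
apply: (@inj_card_bij _ _ ext ext_inj).
by rewrite card_prod !card_Sn card_ord factS mulnC.
Qed.

Lemma sum_ext (R : nmodType) (F : 'S_m.+1 -> R) :
  (\sum_(p : 'S_m.+1) F p = \sum_(q : 'S_m) \sum_(v : 'I_m.+1) F (ext (q, v)))%R.
Proof.
rewrite (reindex ext); last by apply: onW_bij; exact: ext_bij.
by rewrite pair_bigA.
Qed.

End Ext.

Lemma val_lift n (h : 'I_n) i : val (lift h i) = bump h i.
Proof. by []. Qed.

Lemma lift_ltn n (h : 'I_n) x y : (lift h x < lift h y) = (x < y).
Proof. rewrite !val_lift /bump; case: leqP; case: leqP; lia. Qed.

Lemma widen_lift m (i : 'I_m) : widen_ord (leqnSn m) i = lift ord_max i.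
Proof. by apply: val_inj; rewrite /= /bump leqNgt ltn_ord. Qed.

Lemma card_split m (P : pred 'I_m.+1) :
  #|[pred i | P i]| = #|[pred j : 'I_m | P (lift ord_max j)]| + P ord_max.
Proof.
rewrite -!sum1_card big_mkcond big_ord_recr /= [in RHS]big_mkcond.
congr (_ + _).
by apply: eq_bigr => i _; rewrite widen_lift.
Qed.

Section Ext2.
Variable m : nat.

Lemma lrm_at_lift (q : 'S_m) v j :
  lrm_at (ext (q, v)) (lift ord_max j) = lrm_at q j.
Proof.
apply/forallP/forallP => H i.
  apply/implyP => lt; have := implyP (H (lift ord_max i)).
  by rewrite !ext_lift !lift_ltn; apply.
apply/implyP; case: (unliftP ord_max i) => [i' ->|->].
  by rewrite !ext_lift !lift_ltn; apply/implyP.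
by rewrite lift_max ltnNge /= ltnW.
Qed.

Lemma lrm_at_max (q : 'S_m) v :
  lrm_at (ext (q, v)) ord_max = (v == ord_max).
Proof.
apply/forallP/eqP => [H|->].
  rewrite ext_max in H.
  case: (unliftP ord_max (((ext (q, v))^-1)%g ord_max)) => [i Ei|Ei].
    have := implyP (H (lift ord_max i)); rewrite -Ei permKV Ei lift_max ltn_ord.
    by move/(_ isT); rewrite ltnNge -ltnS ltn_ord.
  by have := permKV (ext (q, v)) ord_max; rewrite Ei ext_max.
move=> i; apply/implyP => lt; rewrite ext_max.
case: (unliftP ord_max i) => [i' Ei|Ei]; last by rewrite Ei ltnn in lt.
rewrite Ei ext_lift val_lift /bump /=.
have := ltn_ord (q i'); lia.
Qed.

Lemma lrm_ext (q : 'S_m) v : lrm (ext (q, v)) = lrm q + (v == ord_max).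
Proof.
rewrite /lrm card_split lrm_at_max; congr (_ + _).
by apply: eq_card => j; rewrite !inE lrm_at_lift.
Qed.

End Ext2.

Lemma card_lt n i : i <= n -> #|[pred l : 'I_n | l < i]| = i.
Proof.
move=> H; rewrite -sum1_card.
rewrite -(big_ord_widen_cond n (fun _ => true) (fun _ => 1) H) /=.
by rewrite sum1_card card_ord.
Qed.

Lemma val_filt n i : i < n ->
  map val [seq j <- enum 'I_n | (val j <= i)] = iota 0 i.+1.
Proof.
move=> H; rewrite -(filter_map val (fun x => x <= i)) val_enum_ord.
by rewrite (filter_iota_leq 0 H).
Qed.

Lemma count_lrm n (p : 'S_n) (y : 'I_n) :
  (#|[pred l : 'I_n | (l <= y) && (p l < p y)]| == y) = lrm_at p y.
Proof.
have sub : [pred l : 'I_n | (l <= y) && (p l < p y)] \subset [pred l : 'I_n | l < y].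
  apply/subsetP => l; rewrite !inE => /andP[]; rewrite leq_eqVlt.
  by move=> /orP[/eqP/val_inj ->|//]; rewrite ltnn.
have := subset_leqif_card sub; rewrite card_lt 1?ltnW //.
move=> [_ ->]; apply/subsetP/forallP => H x.
  apply/implyP => lt; have := H x; rewrite !inE lt => /(_ isT) /andP[].
  by [].
rewrite !inE => lt; rewrite (ltnW lt) /=; exact: (implyP (H x)).
Qed.

Lemma last_iota k b a : last a (iota b k.+1) = b + k.
Proof.
elim: k b a => [|k IH] b a; first by rewrite addn0.
have -> : iota b k.+2 = b :: iota b.+1 k.+1 by [].
by rewrite last_cons IH addSnnS.
Qed.

Lemma relpat_size n (p : 'S_n) i : i < n -> size (relpat p i) = i.+1.
Proof. by move=> H; rewrite /relpat size_map -(size_map val) val_filt // size_iota. Qed.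

Lemma relpat_last n (p : 'S_n) i (y : 'I_n) : val y = i ->
  (last 0 (relpat p i) == i) = lrm_at p y.
Proof.
move=> Ey; have Hi : i < n by rewrite -Ey ltn_ord.
rewrite /relpat -count_lrm.
have := val_filt Hi; case E: [seq j <- enum 'I_n | (val j <= i)%N] => [//|x l] /= Ev.
rewrite last_map.
have Ly : last x l = y.
  apply: val_inj; rewrite Ey -(last_map val) /=.
  case: Ev => Ex ->; case: (i) Ex => [|i'] Ex; first by [].
  by rewrite last_iota.
by rewrite Ly Ey.
Qed.

Section Ext3.
Variable m : nat.

Lemma relpat_ext (q : 'S_m) v i : i < m -> relpat (ext (q, v)) i = relpat q i.
Proof.
move=> H; rewrite /relpat enum_ordSr filter_rcons /=.
have -> : (m <= i) = false by rewrite leqNgt H.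
rewrite filter_map -map_comp; apply: eq_map => j /=.
rewrite widen_lift card_split /=.
have -> : (m <= i) = false by rewrite leqNgt H.
rewrite addn0; apply: eq_card => l; rewrite !inE !ext_lift !lift_ltn.
have -> : bump m l = l by rewrite /bump leqNgt ltn_ord. by [].
Qed.
End Ext3.

Lemma bump_max m (j : 'I_m) : bump m j = j.
Proof. by rewrite /bump leqNgt ltn_ord. Qed.

Definition st n (s : strategy) (p : 'S_n) : nat :=
  find (fun i => s (relpat p i)) (iota 0 n).

Definition atmax n (p : 'S_n) (t : nat) : bool :=
  [exists i : 'I_n, (val i == t) && (val (p i) == n.-1)].

Section Ext4.
Variable m : nat.
Variable s : strategy.

Lemma st_ext (q : 'S_m) v : st s (ext (q, v)) =
  if st s q < m then st s q else (if s (relpat (ext (q, v)) m) then m else m.+1).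
Proof.
have E : {in iota 0 m, (fun i => s (relpat (ext (q, v)) i)) =1 (fun i => s (relpat q i))}.
  by move=> i; rewrite mem_iota add0n => /andP[_ lt] /=; rewrite relpat_ext.
rewrite /st; have -> : iota 0 m.+1 = iota 0 m ++ [:: m] by rewrite -addn1 iotaD.
rewrite find_cat (eq_in_find E) (eq_in_has E) has_find size_iota.
case: ifP => // _ /=; by case: (s _); rewrite ?addn0 ?addn1.
Qed.

Lemma stop_time_ext (q : 'S_m) v : stop_time s (ext (q, v)) = st s q.
Proof.
apply: eq_in_find => i; rewrite mem_iota add0n => /andP[_ lt] /=.
by rewrite relpat_ext.
Qed.

Lemma st_le n (p : 'S_n) : st s p <= n.
Proof. by have := find_size (fun i => s (relpat p i)) (iota 0 n); rewrite size_iota. Qed.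

Lemma atmax_ext (q : 'S_m) v t : t < m ->
  atmax (ext (q, v)) t = atmax q t && (v != ord_max).
Proof.
move=> lt; apply/existsP/andP => [[i /andP[/eqP Ei Ev]]|[/existsP[i /andP[/eqP Ei Ev]] Hv]].
  case: (unliftP ord_max i) Ei Ev => [j ->|->]; last by move=> /= E; rewrite E ltnn in lt.
  move=> Ej; rewrite val_lift /= bump_max in Ej; rewrite ext_lift val_lift /bump /= => /eqP Eq.
  have := ltn_ord (q j); have := ltn_ord v.
  case: (leqP v (q j)) => Hvq Hv Hq; rewrite /= in Eq.
    split; first by apply/existsP; exists j; rewrite -Ej eqxx /=; apply/eqP; lia.
    apply/eqP => Evm; move: Hvq; rewrite Evm /=; lia.
  lia.
exists (lift ord_max i); rewrite val_lift bump_max Ei eqxx /= ext_lift val_lift /bump.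
have Hv' : nat_of_ord v != m by apply: contra Hv => /eqP E; apply/eqP/val_inj.
move/eqP: Ev => Ev; move/eqP: Hv' => Hv'; have H2 := ltn_ord v; rewrite Ev.
have -> : (v <= m.-1) = true by apply/idP; lia.
apply/eqP; lia.
Qed.

Lemma atmax_ext_m (q : 'S_m) v : atmax (ext (q, v)) m = (v == ord_max).
Proof.
apply/existsP/eqP => [[i /andP[/eqP Ei Ev]]|->].
  move: Ev; have -> : i = ord_max by apply: val_inj.
  by rewrite ext_max => /eqP Ev; apply: val_inj.
by exists ord_max; rewrite ext_max /= !eqxx.
Qed.

Lemma pos_ext (q : 'S_m) v k :
  positional k (relpat (ext (q, v)) m) = (k <= m) && (v == ord_max).
Proof.
rewrite /positional relpat_size // ltnS /=.
by rewrite (@relpat_last _ _ m ord_max) // lrm_at_max.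
Qed.

End Ext4.

Section Real.
Variable R : realFieldType.
Variable theta : R.
Hypothesis th0 : (0 <= theta)%R.
Local Open Scope ring_scope.

Definition Phi n (s : strategy) (a b : R) : R :=
  \sum_(p : 'S_n) theta ^+ lrm p *
     (if (st s p < n)%N then (if atmax p (st s p) then a else 0) else b).

Fixpoint Ub n (a b : R) : R :=
  if n is n'.+1 then Ub n' (n'%:R * a) (theta * Num.max a b + n'%:R * b) else b.

Fixpoint Pv (k : nat) n (a b : R) : R :=
  if n is n'.+1 then Pv k n' (n'%:R * a) (theta * (if (k <= n')%N then a else b) + n'%:R * b)
  else b.

Lemma sumv m (f : 'I_m.+1 -> R) :
  \sum_(v : 'I_m.+1) theta ^+ (v == ord_max) * f v =
  \sum_(j < m) f (widen_ord (leqnSn m) j) + theta * f ord_max.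
Proof.
rewrite big_ord_recr /= eqxx expr1; congr (_ + _).
apply: eq_bigr => j _.
have -> : (widen_ord (leqnSn m) j == ord_max) = false.
  by apply/negbTE; rewrite -val_eqE /= neq_ltn ltn_ord.
by rewrite expr0 mul1r.
Qed.

Lemma widen_neq m (j : 'I_m) : (widen_ord (leqnSn m) j == ord_max) = false.
Proof. by apply/negbTE; rewrite -val_eqE /= neq_ltn ltn_ord. Qed.

Lemma Phi0 s a b : Phi 0 s a b = b.
Proof.
rewrite /Phi (eq_bigr (fun _ => b)); first by rewrite sumr_const card_Sn /= mulr1n.
move=> p _; have -> : lrm p = 0%N.
  by apply/eqP; rewrite -leqn0; apply: (leq_trans (max_card _)); rewrite card_ord.
by rewrite expr0 mul1r /st /=.
Qed.

Lemma Phi_step m s a b : 0 <= a -> 0 <= b ->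
  Phi m.+1 s a b <= Phi m s (m%:R * a) (theta * Num.max a b + m%:R * b).
Proof.
move=> a0 b0; rewrite /Phi sum_ext; apply: ler_sum => q _.
under eq_bigr do rewrite lrm_ext exprD -mulrA.
rewrite -mulr_sumr; apply: ler_wpM2l; first exact: exprn_ge0.
case: ltnP => Ht.
  under eq_bigr do rewrite st_ext Ht ltnS (ltnW Ht) atmax_ext //.
  rewrite sumv eqxx andbF mulr0 addr0.
  under eq_bigr do rewrite widen_neq andbT.
  by case: (atmax _ _); rewrite sumr_const card_ord ?mul0rn // mulr_natl.
have Em : st s q = m by apply/eqP; rewrite eqn_leq Ht st_le.
have E i : (if (st s (ext (q, i)) < m.+1)%N
     then if atmax (ext (q, i)) (st s (ext (q, i))) then a else 0 else b) =
   (if s (relpat (ext (q, i)) m) then (if i == ord_max then a else 0) else b).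
  rewrite st_ext Em ltnn; case: (s _); by rewrite ?ltnSn ?atmax_ext_m ?ltnn.
under eq_bigr do rewrite E.
rewrite sumv eqxx; under eq_bigr do rewrite widen_neq.
rewrite [X in _ <= X]addrC; apply: lerD.
  apply: le_trans (_ : \sum_(j < m) b <= _).
    by apply: ler_sum => j _; case: (s _).
  by rewrite sumr_const card_ord mulr_natl.
apply: ler_wpM2l => //; case: (s _).
  by rewrite comparable_le_max ?lexx ?real_comparable ?ger0_real.
by rewrite comparable_le_max ?lexx ?orbT ?real_comparable ?ger0_real.
Qed.

Lemma Phi_step_pos m k a b :
  Phi m.+1 (positional k) a b =
  Phi m (positional k) (m%:R * a) (theta * (if (k <= m)%N then a else b) + m%:R * b).
Proof.
rewrite /Phi sum_ext; apply: eq_bigr => q _.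
under eq_bigr do rewrite lrm_ext exprD -mulrA.
rewrite -mulr_sumr; congr (_ * _).
case: ltnP => Ht.
  under eq_bigr do rewrite st_ext Ht ltnS (ltnW Ht) atmax_ext //.
  rewrite sumv eqxx andbF mulr0 addr0.
  under eq_bigr do rewrite widen_neq andbT.
  by case: (atmax _ _); rewrite sumr_const card_ord ?mul0rn // mulr_natl.
have Em : st (positional k) q = m by apply/eqP; rewrite eqn_leq Ht st_le.
have E i : (if (st (positional k) (ext (q, i)) < m.+1)%N
     then if atmax (ext (q, i)) (st (positional k) (ext (q, i))) then a else 0 else b) =
   (if (k <= m)%N && (i == ord_max) then (if i == ord_max then a else 0) else b).
  rewrite st_ext Em ltnn pos_ext; case: (_ && _); by rewrite ?ltnSn ?atmax_ext_m ?ltnn.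
under eq_bigr do rewrite E.
rewrite sumv eqxx andbT; under eq_bigr do rewrite widen_neq andbF.
by rewrite sumr_const card_ord mulr_natl addrC.
Qed.

Lemma Phi_bound n s a b : 0 <= a -> 0 <= b -> Phi n s a b <= Ub n a b.
Proof.
elim: n a b => [|n IH] a b a0 b0; first by rewrite Phi0.
apply: le_trans (@Phi_step n s a b a0 b0) _; rewrite /=; apply: IH.
  by apply: mulr_ge0 => //; apply: ler0n.
apply: addr_ge0; last by apply: mulr_ge0 => //; apply: ler0n.
apply: mulr_ge0 => //.
by rewrite comparable_le_max ?a0 ?real_comparable ?ger0_real.
Qed.

Lemma Phi_pos n k a b : Phi n (positional k) a b = Pv k n a b.
Proof.
elim: n a b => [|n IH] a b; first by rewrite Phi0.
by rewrite Phi_step_pos IH.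
Qed.

Definition Win n (s : strategy) : R :=
  \sum_(p : 'S_n | wins s p) theta ^+ lrm p.

Lemma Win_Phi m s : Win m.+1 s = Phi m s m%:R theta.
Proof.
rewrite /Win big_mkcond /= /Phi sum_ext; apply: eq_bigr => q _.
have Ew v : (if wins s (ext (q, v)) then theta ^+ lrm (ext (q, v)) else 0) =
  theta ^+ lrm q * (theta ^+ (v == ord_max) * (if wins s (ext (q, v)) then 1 else 0)).
  by rewrite lrm_ext exprD; case: (wins _ _); rewrite ?mulr1 ?mulr0.
under eq_bigr do rewrite Ew.
rewrite -mulr_sumr; congr (_ * _).
have W i : wins s (ext (q, i)) = atmax (ext (q, i)) (st s q).
  by rewrite /wins stop_time_ext.
under eq_bigr do rewrite W.
case: ltnP => Ht.
  under eq_bigr do rewrite atmax_ext //.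
  rewrite sumv eqxx andbF mulr0 addr0.
  under eq_bigr do rewrite widen_neq andbT.
  by case: (atmax _ _); rewrite sumr_const card_ord ?mul0rn // mulr1n.
have Em : st s q = m by apply/eqP; rewrite eqn_leq Ht st_le.
rewrite Em; under eq_bigr do rewrite atmax_ext_m.
rewrite sumv eqxx mulr1; under eq_bigr do rewrite widen_neq.
by rewrite sumr_const mul0rn add0r.
Qed.

End Real.

Lemma find_iota0 (P : pred nat) n j : j <= n -> (forall i, i < j -> ~~ P i) ->
  (j < n -> P j) -> find P (iota 0 n) = j.
Proof.
move=> jn Hb Hj.
have := find_size P (iota 0 n); rewrite size_iota => tn.
case: (ltngtP (find P (iota 0 n)) j) => // [lt|gt].
  have hs : has P (iota 0 n) by rewrite has_find size_iota (leq_trans lt jn).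
  have := nth_find 0 hs; rewrite nth_iota ?add0n; last by rewrite (leq_trans lt jn).
  by move/negP: (Hb _ lt).
have jn' : j < n by apply: leq_trans gt tn.
have := before_find 0 gt; rewrite nth_iota // add0n => E.
by have := Hj jn'; rewrite E.
Qed.

Lemma max_lrm n (p : 'S_n) j : val (p j) = n.-1 -> lrm_at p j.
Proof.
move=> Ej; apply/forallP => i; apply/implyP => lt.
have ne : p i != p j by rewrite (inj_eq perm_inj) -val_eqE /= neq_ltn lt.
have ne' : nat_of_ord (p i) <> nat_of_ord (p j) by move=> E; move/eqP: ne; apply; apply: val_inj.
have h := ltn_ord (p i); have Ej' : nat_of_ord (p j) = n.-1 by [].
rewrite Ej'; rewrite Ej' in ne'; lia.
Qed.

Lemma posP n (p : 'S_n) k i (y : 'I_n) : val y = i ->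
  positional k (relpat p i) = (k <= i) && lrm_at p y.
Proof.
move=> Ey; have Hi : i < n by rewrite -Ey ltn_ord.
by rewrite /positional relpat_size // ltnS (relpat_last p Ey).
Qed.

Lemma wins_kwin n (p : 'S_n) k : k <= n.-1 -> wins (positional k) p = kwinnable p k.
Proof.
move=> kn; rewrite /wins /kwinnable /stop_time.
set t := find _ _.
have tn : t <= n.-1 by have := find_size (fun i => positional k (relpat p i)) (iota 0 n.-1); rewrite size_iota.
apply/existsP/existsP => [[j /andP[/eqP Ej Pj]]|[j /and4P[kj lj Pj /forallP Hb]]].
  exists j; rewrite (max_lrm (eqP Pj)) Pj /=.
  have Hb : forall i : 'I_n, (i < j)%N -> ~~ lrm_at p i || (i < k)%N.
    move=> i lt; have lt' : (val i < t)%N by rewrite -Ej.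
    have := before_find 0 lt'.
    rewrite nth_iota; last by rewrite (leq_trans lt) // Ej.
    by rewrite add0n (posP _ _ (erefl (val i))) => /negbT; rewrite negb_and orbC -ltnNge.
  apply/andP; split.
    case: (ltnP t n.-1) => tlt; last by rewrite Ej (leq_trans kn tlt).
    have hs : has (fun i => positional k (relpat p i)) (iota 0 n.-1) by rewrite has_find size_iota.
    have := nth_find 0 hs; rewrite -/t nth_iota // add0n (posP _ _ Ej).
    by rewrite Ej; case/andP.
  apply/forallP => i; apply/implyP => /andP[ki lt].
  by have := Hb i lt; rewrite ltnNge ki orbF.
exists j; rewrite Pj andbT eq_sym; apply/eqP; rewrite /t.
apply: find_iota0.
- change (nat_of_ord j <= n.-1); have := ltn_ord j; lia.
- move=> i lt; have iN : i < n by apply: (leq_trans lt); apply: ltnW; exact: ltn_ord.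
  rewrite (posP _ _ (erefl (val (Ordinal iN)))).
  case: (leqP k i) => //= ki.
  by have := implyP (Hb (Ordinal iN)); rewrite /= ki lt => /(_ isT).
- by move=> _; rewrite (posP _ _ (erefl (val j))) kj lj.
Qed.

Section Kappa.
Local Open Scope ring_scope.
Variable R : realFieldType.
Variable N : nat.
Hypothesis hN : (2 <= N)%N.

Notation h := (H N R).

Lemma H_ge0 j : 0 <= h j.
Proof. by apply: sumr_ge0 => i _; rewrite invr_ge0 ler0n. Qed.

Lemma H_pos j : (j <= N - 2)%N -> 0 < h j.
Proof.
move=> jN; rewrite /H.
have -> : N = (N.-1).+1 by rewrite prednK //; lia.
rewrite big_nat_recr /=; last by lia.
apply: ltr_wpDl; first by apply: sumr_ge0 => i _; rewrite invr_ge0 ler0n.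
by rewrite invr_gt0 ltr0n; lia.
Qed.

Lemma H_mono j j' : (j <= j')%N -> h j' <= h j.
Proof.
move=> jj; rewrite /H.
case: (leqP j'.+1 N) => hj'.
  rewrite (big_cat_nat (m := j.+1) (n := j'.+1)) //=.
  by rewrite lerDr; apply: sumr_ge0 => i _; rewrite invr_ge0 ler0n.
rewrite (@big_geq _ _ _ j'.+1 N); last by apply: ltnW.
exact: H_ge0.
Qed.

Lemma H_rec j : (0 < j < N)%N -> h j.-1 = (j%:R)^-1 + h j.
Proof.
move=> /andP[j0 jN]; rewrite /H prednK //.
by rewrite big_ltn.
Qed.

Lemma H_last : h (N - 2) = ((N.-1)%:R)^-1.
Proof.
rewrite /H.
have -> : (N - 2).+1 = N.-1 by lia.
have -> : N = (N.-1).+1 by rewrite prednK //; lia.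
by rewrite big_nat1.
Qed.

Lemma le_inv (x y : R) : 0 < y -> (x <= y^-1) = (x * y <= 1).
Proof. by move=> y0; rewrite -(ler_pM2r y0 x (y^-1)) mulVf // gt_eqF. Qed.

Lemma lt_inv (x y : R) : 0 < y -> (y^-1 < x) = (1 < x * y).
Proof. by move=> y0; rewrite -(ltr_pM2r y0 (y^-1) x) mulVf // gt_eqF. Qed.

Lemma kappa_spec (theta : R) : 0 < theta ->
  [/\ (kappa N theta <= N.-1)%N,
      (forall j, (kappa N theta <= j)%N -> (j <= N - 2)%N -> theta * h j <= 1) &
      ((0 < kappa N theta)%N -> 1 < theta * h (kappa N theta).-1)].
Proof.
move=> th0; rewrite /kappa.
case: ifP => [C1|C1].
  split => // j _ jN.
  rewrite le_inv in C1; last by apply: H_pos; lia.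
  apply: le_trans C1; apply: ler_wpM2l; [exact: ltW | apply: H_mono].
  by [].
case: ifP => [C2|C2].
  split => //; first by move=> j Kj jN; lia.
  move=> _; have -> : (N.-1).-1 = (N - 2)%N by lia.
  rewrite H_last -lt_inv ?invrK // invr_gt0 ltr0n; lia.
pose P := (fun k : 'I_N => (0 < k <= N - 2)%N && ((h k.-1)^-1 < theta) && (theta <= (h k)^-1)).
have ex : exists k : 'I_N, P k.
  have gen : forall j, (1 <= j <= N - 2)%N -> theta <= (h j)^-1 -> exists k : 'I_N, P k.
    elim=> [|j IH]; first by []. move=> /andP[j1 jN] Hj.
    case: (ltnP 0 j) => j0.
      case: (boolP (theta <= (h j)^-1)) => Cj.
        by apply: IH => //; rewrite j0 /=; lia.
      have jN' : (j.+1 < N)%N by lia.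
      exists (Ordinal jN'); rewrite /P /= Hj andbT; apply/andP; split; first by lia.
      by rewrite ltNge.
    have jN' : (j.+1 < N)%N by lia.
    have j00 : j = 0%N by lia.
    exists (Ordinal jN'); rewrite /P /= Hj andbT j00 /=; apply/andP; split; first by lia.
    by rewrite ltNge C1.
  have Ht : theta <= (h (N - 2))^-1.
    by rewrite H_last invrK; rewrite ltNge in C2; move/negbT: C2; rewrite negbK.
  case: (ltnP 0 (N - 2)) => N2.
    by apply: (gen (N - 2)%N) => //; apply/andP; split.
  have E0 : (N - 2 = 0)%N by lia.
  by rewrite E0 C1 in Ht.
have cp : (0 < #|P|)%N by case: ex => k Pk; apply/card_gt0P; exists k.
have [k Pk Ek] := @eq_bigmax_cond _ P (fun k : 'I_N => nat_of_ord k) cp.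
have -> : \max_(k < N | P k) k = k by rewrite -Ek; apply: eq_bigl => i.
move: Pk; rewrite /P => /andP[/andP[/andP[k1 kN] lo] hi].
split.
- by have := ltn_ord k; lia.
- move=> j kj jN; rewrite le_inv in hi; last by apply: H_pos.
  apply: le_trans hi; apply: ler_wpM2l; [exact: ltW | exact: H_mono].
- move=> _; rewrite lt_inv in lo => //; apply: H_pos; lia.
Qed.

End Kappa.

Section Final.
Local Open Scope ring_scope.
Variable R : realFieldType.
Variable theta : R.
Hypothesis th0 : 0 <= theta.

Lemma UbS n (a b : R) : Ub theta n.+1 a b = Ub theta n (n%:R * a) (theta * Num.max a b + n%:R * b).
Proof. by []. Qed.

Lemma PvS k n (a b : R) : Pv theta k n.+1 a b =
  Pv theta k n (n%:R * a) (theta * (if (k <= n)%N then a else b) + n%:R * b).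
Proof. by []. Qed.

Lemma L2 n k (a b : R) : (n <= k)%N -> 0 <= a -> a <= b ->
  Ub theta n a b = Pv theta k n a b.
Proof.
elim: n a b => [|n IH] a b //= nk a0 ab.
have -> : (k <= n)%N = false by apply/negbTE; rewrite -ltnNge.
rewrite max_r //; apply: IH => //; first exact: ltnW.
  by apply: mulr_ge0 => //; apply: ler0n.
rewrite -[X in X <= _]add0r; apply: lerD.
  by apply: mulr_ge0 => //; apply: le_trans ab.
by apply: ler_wpM2l => //; apply: ler0n.
Qed.

Lemma L1 N K :
  (forall j, (K <= j)%N -> (j <= N - 2)%N -> theta * H N R j <= 1) ->
  ((0 < K)%N -> 1 <= theta * H N R K.-1) ->
  forall j (a : R), 0 <= a -> (K <= j)%N -> (j <= N - 2)%N ->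
  Ub theta j.+1 a (theta * H N R j * a) = Pv theta K j.+1 a (theta * H N R j * a).
Proof.
move=> F1 F2; elim=> [|j IH] a a0 Kj jN; (rewrite UbS PvS Kj max_l;
  last by rewrite -[X in _ <= X]mul1r; apply: ler_wpM2r => //; apply: F1).
  by [].
have E : theta * a + j.+1%:R * (theta * H N R j.+1 * a) =
         theta * H N R j * (j.+1%:R * a).
  rewrite (@H_rec R N j.+1) /=; last by lia.
  by field; rewrite -natr1 addrC -natr1 pnatr_eq0 || rewrite (_ : 1 + j%:R = j.+1%:R) ?pnatr_eq0 // -add1n natrD.
rewrite E.
case: (leqP K j) => Kj'.
  by apply: IH => //; [apply: mulr_ge0 => //; apply: ler0n | lia].
have EK : K = j.+1 by lia.
apply: L2; first by rewrite EK.
  by apply: mulr_ge0 => //; apply: ler0n.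
rewrite -[X in X <= _]mul1r; apply: ler_wpM2r; first by apply: mulr_ge0 => //; apply: ler0n.
have K0 : (0 < K)%N by rewrite EK.
by have := F2 K0; rewrite EK.
Qed.

End Final.

Section Main.
Local Open Scope ring_scope.

Lemma key (R : realFieldType) (N : nat) (hN : (2 <= N)%N) (theta : R) :
  0 < theta ->
  (forall s, Win theta N s <= Win theta N (positional (kappa N theta))) /\
  (forall k, (k <= N.-1)%N -> W N theta k = Win theta N (positional k)).
Proof.
move=> th0; have th0' := ltW th0.
case: N hN => [//|m] hN.
have [KN F1 F2] := kappa_spec hN th0.
set K := kappa m.+1 theta in KN F1 F2 *.
split; last first.
  move=> k kN; rewrite /W /Win; apply: eq_bigl => p.
  by rewrite wins_kwin.
have UP : Ub theta m m%:R theta = Pv theta K m m%:R theta.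
  case: (ltnP K m) => Km.
    have Hl := @H_last R m.+1 hN.
    have E : theta = theta * H m.+1 R m.-1 * m%:R.
      have -> : m.-1 = (m.+1 - 2)%N by lia.
      rewrite Hl /= -mulrA mulVf ?mulr1 // pnatr_eq0; lia.
    have F2' : (0 < K)%N -> 1 <= theta * H m.+1 R K.-1 by move=> K0; apply: ltW; apply: F2.
    have Km' : (K <= m.-1)%N by lia.
    have mN : (m.-1 <= m.+1 - 2)%N by lia.
    have := @L1 R theta th0' m.+1 K F1 F2' m.-1 m%:R (ler0n _ _) Km' mN.
    by rewrite prednK -?E //; lia.
  have EK : K = m by have := KN; simpl; lia.
  apply: L2 => //.
  have K0 : (0 < K)%N by rewrite EK; lia.
  have := F2 K0; rewrite EK.
  have -> : m.-1 = (m.+1 - 2)%N by lia.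
  rewrite (@H_last R m.+1 hN) /= -lt_inv ?invrK => [H1|]; first exact: ltW.
  by rewrite invr_gt0 ltr0n; lia.
move=> s.
rewrite !Win_Phi Phi_pos -UP.
apply: Phi_bound => //; exact: ler0n.
Qed.

End Main.

Local Open Scope ring_scope.

Theorem corollary4p6 (R : realFieldType) (N : nat) (hN : (2 <= N)%N) :
  (forall theta : R, 0 < theta ->
     (forall k : nat, (k <= N.-1)%N -> W N theta k <= W N theta (kappa N theta))
     /\ (forall s : strategy, winprob N theta s
                              <= winprob N theta (positional (kappa N theta))))
  /\ (forall theta1 theta2 : R, 0 < theta1 -> theta1 <= theta2 ->
        (kappa N theta1 <= kappa N theta2)%N).
Proof.
split.
  move=> theta th0; have [Hs Hk] := key hN th0.
  have [KN _ _] := kappa_spec hN th0.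
  split.
    by move=> k kN; rewrite (Hk k kN) (Hk _ KN); exact: Hs.
  move=> s; rewrite /winprob; apply: ler_wpM2r; last exact: Hs.
  rewrite invr_ge0; apply: sumr_ge0 => p _; apply: exprn_ge0; exact: ltW.
move=> t1 t2 t1p t12.
have t2p : 0 < t2 := lt_le_trans t1p t12.
have [K1N F11 F21] := kappa_spec hN t1p.
have [K2N F12 F22] := kappa_spec hN t2p.
rewrite leqNgt; apply/negP => lt.
have jN : (kappa N t2 <= N - 2)%N by lia.
have h1 := F12 _ (leqnn _) jN.
have K0 : (0 < kappa N t1)%N by lia.
have h2 := F21 K0.
have h3 : H N R (kappa N t1).-1 <= H N R (kappa N t2) by apply: H_mono; lia.
have : t1 * H N R (kappa N t1).-1 <= t2 * H N R (kappa N t2).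
  apply: le_trans (_ : t1 * H N R (kappa N t2) <= _).
    by apply: ler_wpM2l => //; exact: ltW.
  by apply: ler_wpM2r => //; exact: H_ge0.
move=> h4.
have := lt_le_trans h2 (le_trans h4 h1).
by rewrite ltxx.
Qed.
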